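(* For every integer $q\ge 6$ there exists a good $\mathcal{SOS}_q(2)$ of period $\frac{(q-2)(q-4)}{2}$ if $q\equiv 0\pmod 4$, $\frac{(q-3)(q-5)}{2}$ if $q\equiv 1\pmod 4$, $\frac{(q-2)(q-6)}{2}$ if $q\equiv 2\pmod 4$, and $\frac{(q-3)(q-7)}{2}$ if $q\equiv 3\pmod 4$.
   Context: For a periodic sequence $S=(s_i)$ over $\mathbb{Z}_q$ write $\mathbf{s}_n(i)=(s_i,\ldots,s_{i+n-1})$; $\mathbf{u}^R$ denotes the reverse of a tuple and $-\mathbf{u}$ its termwise negative. An $\mathcal{SOS}_q(n)$ is a periodic sequence of period $m$ over $\mathbb{Z}_q$ such that $\mathbf{s}_n(i)=\mathbf{s}_n(j)$ implies $i\equiv j\pmod m$, and $\mathbf{s}_n(i)\neq\mathbf{s}_n(j)^R$ and $\mathbf{s}_n(i)\neq-\mathbf{s}_n(j)^R$ for all $i,j$. It is good if every run of consecutive $0$ terms has length at most $n-2$ (for $n=2$: no term equals $0$). *)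

(* Defs.v *)
From mathcomp Require Import all_boot all_order all_algebra.
Set Implicit Arguments. Unset Strict Implicit. Unset Printing Implicit Defensive.
Import GRing.Theory.
Local Open Scope ring_scope.

(* A periodic sequence of period m over Z_q is represented by one period
   w = (s_0, ..., s_{m-1}) (size w = m); s_i = nth 0 w (i mod m). *)

Definition window (q : nat) (w : seq 'Z_q) (n i : nat) : seq 'Z_q :=
  mkseq (fun k => nth 0 w ((i + k) %% size w)) n.

Definition is_SOS (q n : nat) (w : seq 'Z_q) : Prop :=
  [/\ (forall i j : nat, (i < size w)%N -> (j < size w)%N ->
          window w n i = window w n j -> i = j),
      (forall i j : nat, (i < size w)%N -> (j < size w)%N ->
          window w n i <> rev (window w n j))
    & (forall i j : nat, (i < size w)%N -> (j < size w)%N ->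
          window w n i <> map (fun x => - x) (rev (window w n j)))].

(* good: every (cyclic) run of consecutive 0 terms has length at most n-2,
   i.e. no n-1 cyclically consecutive terms are all 0. For n = 2 this says
   no term equals 0. *)
Definition is_good (q n : nat) (w : seq 'Z_q) : Prop :=
  forall i : nat, (i < size w)%N -> ~ all (fun x => x == 0) (window w n.-1 i).

Definition sos_period (q : nat) : nat :=
  match (q %% 4)%N with
  | 0 => ((q - 2) * (q - 4)) %/ 2
  | 1 => ((q - 3) * (q - 5)) %/ 2
  | 2 => ((q - 2) * (q - 6)) %/ 2
  | _ => ((q - 3) * (q - 7)) %/ 2
  end%N.

(* Main.v *)
Require Import Defs.
From mathcomp Require Import all_boot all_order all_algebra.
From mathcomp Require Import zify ring.
Set Implicit Arguments. Unset Strict Implicit. Unset Printing Implicit Defensive.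
Import GRing.Theory.
Local Open Scope ring_scope.
Section Phi.
Variables (q k : nat).
Hypothesis hk : (2 * k < q)%N.
Hypothesis hk1 : (0 < k)%N.

Definition phi (a : nat) : 'Z_q :=
  if (a < k)%N then (a.+1)%:R else - ((a - k).+1)%:R.

Lemma q_gt1 : (1 < q)%N. Proof. lia. Qed.

Lemma Zq_eq0 n : (n%:R : 'Z_q) = 0 -> (q %| n)%N.
Proof.
move=> /(congr1 val) /=; rewrite val_Zp_nat ?q_gt1 // => H.
by rewrite /dvdn H.
Qed.

Lemma Zq_eqn a b : (a < q)%N -> (b < q)%N -> (a%:R : 'Z_q) = b%:R -> a = b.
Proof.
move=> ha hb /(congr1 val) /=; rewrite !val_Zp_nat ?q_gt1 // !modn_small //.
Qed.

Lemma phi_nz a : (a < 2 * k)%N -> phi a != 0.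
Proof.
move=> ha; rewrite /phi; case: ifP => h.
  apply/eqP => /Zq_eq0 /(dvdn_leq (ltn0Sn _)); lia.
rewrite oppr_eq0; apply/eqP => /Zq_eq0 /(dvdn_leq (ltn0Sn _)); lia.
Qed.

Lemma phi_neg a : (a < 2 * k)%N -> phi ((a + k) %% (2 * k)) = - phi a.
Proof.
move=> ha; rewrite /phi; case: (ltnP a k) => h.
  rewrite modn_small; last lia.
  rewrite ifF; last lia.
  by rewrite addnK.
rewrite opprK.
have -> : ((a + k) %% (2 * k) = a - k)%N.
  have -> : (a + k = 1 * (2 * k) + (a - k))%N by lia.
  by rewrite modnMDl modn_small //; lia.
by rewrite ifT //; lia.
Qed.

Lemma phi_inj a b : (a < 2 * k)%N -> (b < 2 * k)%N -> phi a = phi b -> a = b.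
Proof.
move=> ha hb; rewrite /phi.
have mixed : forall x y, (x < k)%N -> (k <= y < 2 * k)%N ->
    (x.+1%:R : 'Z_q) <> - ((y - k).+1)%:R.
  move=> x y hx hy /eqP; rewrite -subr_eq0 opprK -natrD => /eqP /Zq_eq0.
  move=> hd; have : (0 < x.+1 + (y-k).+1)%N by lia.
  move=> /dvdn_leq /(_ hd); lia.
case: (ltnP a k) => h1; case: (ltnP b k) => h2.
- move/Zq_eqn => H; have : a.+1 = b.+1 by apply: H; lia.
  by case.
- by move/mixed; lia.
- by move/esym/mixed; lia.
- move/oppr_inj/Zq_eqn => H; have : (a - k).+1 = (b - k).+1 by apply: H; lia.
  lia.
Qed.
End Phi.

Lemma frame q k L (A : nat -> nat) : (2 * k < q)%N -> (0 < k)%N ->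
  (forall i, (i < L)%N -> (A i < 2 * k)%N) ->
  (forall i j, (i < L)%N -> (j < L)%N -> A i = A j ->
      A ((i + 1) %% L)%N = A ((j + 1) %% L)%N -> i = j) ->
  (forall i j, (i < L)%N -> (j < L)%N -> A i = A ((j + 1) %% L)%N ->
      A ((i + 1) %% L)%N = A j -> False) ->
  (forall i j, (i < L)%N -> (j < L)%N -> A i = ((A ((j + 1) %% L) + k) %% (2 * k))%N ->
      A ((i + 1) %% L)%N = ((A j + k) %% (2 * k))%N -> False) ->
  exists w : seq 'Z_q, size w = L /\ is_SOS 2 w /\ is_good 2 w.
Proof.
move=> hk hk0 hA H1 H2 H3.
exists [seq phi q k (A i) | i <- iota 0 L].
set w := [seq _ | i <- _].
have sw : size w = L by rewrite size_map size_iota.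
have nw x : (x < L)%N -> nth 0 w x = phi q k (A x).
  by move=> hx; rewrite (nth_map 0%N) ?size_iota // nth_iota.
have hS i : (i < L)%N -> ((i + 1) %% L < L)%N by move=> hi; rewrite ltn_mod; lia.
have win i : (i < L)%N -> window w 2 i = [:: phi q k (A i); phi q k (A ((i + 1) %% L)%N)].
  move=> hi; rewrite /window /mkseq /= sw addn0 (modn_small hi) nw // nw //; exact: hS.
split=> //; split.
  split.
  - move=> i j; rewrite sw => hi hj; rewrite !win // => -[/phi_inj e1 /phi_inj e2].
    apply: H1 => //; [apply: e1 | apply: e2]; try apply: hA; try apply: hS; done.
  - move=> i j; rewrite sw => hi hj; rewrite !win //= => -[/phi_inj e1 /phi_inj e2].
    apply: (H2 i j) => //; [apply: e1 | apply: e2]; try apply: hA; try apply: hS; done.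
  - move=> i j; rewrite sw => hi hj; rewrite !win //= => -[].
    rewrite -!phi_neg; try apply: hA; try apply: hS; try done.
    move=> /phi_inj e1 /phi_inj e2.
    apply: (H3 i j) => //; [apply: e1 | apply: e2]; try apply: hA; try apply: hS; try done;
      rewrite ltn_mod; lia.
move=> i; rewrite sw => hi.
rewrite /window /mkseq /= sw addn0 (modn_small hi) nw // andbT.
by apply/negP; apply: phi_nz => //; apply: hA.
Qed.
Local Close Scope ring_scope.
Lemma mod_cancel M c a b : coprime M c -> (a < M)%N -> (b < M)%N ->
  a * c = b * c %[mod M] -> a = b.
Proof.
move=> cop.
wlog: a b / (a <= b)%N.
  move=> Hw ha hb e; case: (leqP a b) => h; first exact: Hw.
  by apply/esym/Hw => //; lia.
move=> hab ha hb /eqP; rewrite eq_sym eqn_mod_dvd ?leq_mul2r ?hab ?orbT //.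
rewrite -mulnBl Gauss_dvdl // => hd.
case: (posnP (b - a)) => [h0|hpos]; first lia.
by have := dvdn_leq hpos hd; lia.
Qed.

Section Walk.
Variables (M m : nat) (gen : nat -> nat).
Hypothesis hm : (0 < m)%N.
Hypothesis hM : (0 < M)%N.

Fixpoint P t := if t is t'.+1 then P t' + gen t' else 0.
Definition B J := J %/ m * P m + P (J %% m).
Definition W J := B J %% M.

Lemma B_step J : B J.+1 = B J + gen (J %% m).
Proof.
rewrite /B divnS // modnS; case: (boolP (m %| J.+1)) => hd /=.
  have hJ : J %% m = m.-1.
    have : J.+1 %% m = (J %% m + 1) %% m by rewrite modnDml addn1.
    move: hd; rewrite /dvdn => /eqP ->.
    have := ltn_pmod J hm.
    case: (ltnP (J %% m + 1) m) => h.
      rewrite (modn_small h); lia.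
    lia.
  rewrite hJ; case: m hm hJ => [//|m'] _ hJ /=.
  rewrite addn0 mulnDl mul1n; lia.
by rewrite add0n addnA.
Qed.

Lemma W_step J : (J < M * m)%N -> W ((J + 1) %% (M * m)) = (W J + gen (J %% m)) %% M.
Proof.
move=> hJ; rewrite /W modnDml -B_step addn1.
case: (ltnP J.+1 (M * m)) => h; first by rewrite (modn_small h).
have -> : J.+1 = M * m by lia.
rewrite modnn /B div0n mod0n /= mulnK // modnMl.
by rewrite mul0n /= !addn0 mod0n modnMr.
Qed.

Lemma W_inj (cop : coprime M (P m)) J1 J2 : (J1 < M * m)%N -> (J2 < M * m)%N ->
  W J1 = W J2 -> J1 %% m = J2 %% m -> J1 = J2.
Proof.
move=> h1 h2; rewrite /W /B => e et; rewrite et in e.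
move/eqP: e; rewrite eqn_modDr => /eqP e.
have p1 : (J1 %/ m < M)%N by rewrite ltn_divLR.
have p2 : (J2 %/ m < M)%N by rewrite ltn_divLR.
have := mod_cancel cop p1 p2 e => ed.
by rewrite (divn_eq J1 m) (divn_eq J2 m) ed et.
Qed.
End Walk.
Lemma cong_contra n x g : (x < n)%N -> (0 < g < n)%N -> x = (x + g) %% n -> False.
Proof.
move=> hx hg.
case: (ltnP (x + g) n) => h; first by rewrite (modn_small h); lia.
have -> : x + g = 1 * n + (x + g - n) by lia.
rewrite modnMDl modn_small; lia.
Qed.

Section Even.
Variable l : nat.
Hypothesis hl : (2 <= l)%N.
Definition genE t := if (t < l)%N then t.+1 else t.+2.
Definition nE := 4 * l.
Definition mE := 2 * l - 2.
Definition AE := W nE mE genE.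

Lemma PE t : 2 * P genE t = t * t.+1 + 2 * (t - l).
Proof.
elim: t => [|t IH] //=; rewrite mulnDr IH /genE; case: ifP => h; nia.
Qed.

Lemma PE_val : P genE mE = (l - 2) * (2 * l) + (2 * l - 1).
Proof. have := PE mE; rewrite /mE; nia. Qed.

Lemma copE : coprime nE (P genE mE).
Proof.
rewrite coprime_sym PE_val /nE.
have -> : 4 * l = 2 * (2 * l) by lia.
rewrite coprimeMr.
apply/andP; split.
  have -> : (l - 2) * (2 * l) + (2 * l - 1) = 2 * ((l - 2) * l + l - 1) + 1 by nia.
  by rewrite coprimen2 oddD oddM.
rewrite -coprime_modl modnMDl modn_small; last lia.
have e : 2 * l = (2 * l - 1).+1 by lia.
by rewrite [X in coprime _ X]e coprimenS.
Qed.

Lemma genE_inj a b : genE a = genE b -> a = b.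
Proof. by rewrite /genE; do 2 case: ifP; lia. Qed.

Lemma genE_bnd t : (t < mE)%N -> (0 < genE t < 2 * l)%N.
Proof. by rewrite /genE /mE; case: ifP; lia. Qed.

Lemma even_exists q : (4 * l < q)%N ->
  exists w : seq 'Z_q, size w = nE * mE /\ is_SOS 2 w /\ is_good 2 w.
Proof.
move=> hq.
have hm : (0 < mE)%N by rewrite /mE; lia.
have hn : (0 < nE)%N by rewrite /nE; lia.
have nEe : nE = 2 * (2 * l) by rewrite /nE; lia.
have hA i : (AE i < nE)%N by rewrite /AE /W ltn_mod.
have st i : (i < nE * mE)%N -> AE ((i + 1) %% (nE * mE)) = (AE i + genE (i %% mE)) %% nE.
  by move=> hi; rewrite /AE W_step.
have gb i := genE_bnd (ltn_pmod i hm).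
apply: (@frame q (2 * l) (nE * mE) AE); first lia; first lia.
- by move=> i _; rewrite -nEe.
- move=> i j hi hj e; rewrite !st // e => /eqP; rewrite eqn_modDl.
  have h1 : (genE (i %% mE) < nE)%N by have := gb i; lia.
  have h2 : (genE (j %% mE) < nE)%N by have := gb j; lia.
  rewrite (modn_small h1) (modn_small h2).
  move=> /eqP /genE_inj et.
  exact: (W_inj hm copE hi hj e et).
- move=> i j hi hj; rewrite !st // => e1 e2.
  apply: (@cong_contra nE (AE i) (genE (i %% mE) + genE (j %% mE))).
  + exact: hA.
  + have := gb i; have := gb j; lia.
  + by rewrite {1}e1 -e2 modnDml addnA.
- move=> i j hi hj; rewrite !st // -nEe => e1 e2.
  apply: (@cong_contra nE (AE i) (genE (i %% mE) + genE (j %% mE))).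
  + exact: hA.
  + have := gb i; have := gb j; lia.
  + rewrite addnA -modnDml e2 modnDml {1}e1 modnDml.
    by congr (_ %% _); lia.
Qed.
End Even.
Lemma bits_inj (b c : bool) r1 r2 : (r1 < 4)%N -> (r2 < 4)%N ->
  (if b then odd r1./2 else odd r1) = (if b then odd r2./2 else odd r2) ->
  (if c then odd r1 (+) odd r1./2 else if ~~ b then odd r1./2 else odd r1) =
  (if c then odd r2 (+) odd r2./2 else if ~~ b then odd r2./2 else odd r2) -> r1 = r2.
Proof.
by case: b; case: c; case: r1 => [|[|[|[|r1]]]] //= _; case: r2 => [|[|[|[|r2]]]].
Qed.

Lemma wrap_inj r1 r2 : (r1 < 4)%N -> (r2 < 4)%N ->
  odd r1 (+) odd r1./2 = odd r2 (+) odd r2./2 ->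
  odd ((r1 + 1) %% 4) = odd ((r2 + 1) %% 4) -> r1 = r2.
Proof.
by case: r1 => [|[|[|[|r1]]]] //= _; case: r2 => [|[|[|[|r2]]]].
Qed.

Section Odd.
Variable h : nat.
Hypothesis hh : (1 <= h)%N.
Definition kO := 2 * h + 1.
Definition genO (t : nat) := t.+1.
Definition NO := kO * h.
Definition X := W kO h genO.
Definition sig r J : bool :=
  if J == NO.-1 then odd r (+) odd r./2 else if odd J then odd r./2 else odd r.
Definition AO i := X (i %% NO) + kO * sig (i %/ NO) (i %% NO).

Lemma PO t : 2 * P genO t = t * t.+1.
Proof. by elim: t => [|t IH] //=; rewrite mulnDr IH /genO; nia. Qed.

Lemma copO : coprime kO (P genO h).
Proof.
apply: (@coprime_dvdr _ (h * h.+1)).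
  by rewrite -PO dvdn_mull.
rewrite coprimeMr; apply/andP; split.
  by rewrite coprime_sym /coprime /kO gcdnMDl gcdn1.
have -> : kO = 1 * h.+1 + h by rewrite /kO; lia.
by rewrite coprime_sym /coprime gcdnMDl -/(coprime _ _) coprimeSn.
Qed.

Lemma NO_ge3 : (3 <= NO)%N.
Proof. rewrite /NO /kO; nia. Qed.

Lemma hkO : (0 < kO)%N. Proof. rewrite /kO; lia. Qed.
Lemma hNO : (0 < NO)%N. Proof. have := NO_ge3; lia. Qed.

Lemma X_lt J : (X J < kO)%N.
Proof. by rewrite /X /W ltn_mod hkO. Qed.

Lemma AO_lt i : (AO i < 2 * kO)%N.
Proof. rewrite /AO; have := X_lt (i %% NO); case: sig => /=; lia. Qed.

Lemma AO_mod i : AO i %% kO = X (i %% NO).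
Proof. by rewrite /AO addnC mulnC modnMDl modn_small // X_lt. Qed.

Lemma dec a b (s t : bool) : (a < kO)%N -> (b < kO)%N -> a + kO * s = b + kO * t ->
  a = b /\ s = t.
Proof. by case: s; case: t => /=; lia. Qed.

Lemma mod_next i : (i < 4 * NO)%N ->
  ((i + 1) %% (4 * NO)) %% NO = ((i %% NO) + 1) %% NO.
Proof.
move=> hi; rewrite (@modn_dvdm (4 * NO) (i + 1) NO); last exact: dvdn_mull (dvdnn NO).
by rewrite modnDml.
Qed.

Lemma X_next i : (i < 4 * NO)%N ->
  X (((i + 1) %% (4 * NO)) %% NO) = (X (i %% NO) + (i %% NO %% h).+1) %% kO.
Proof.
move=> hi; rewrite mod_next //.
rewrite /X W_step //; last by rewrite -/NO ltn_mod hNO.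
exact: hkO.
Qed.

Lemma next_succ i : (i < 4 * NO)%N -> ((i %% NO).+1 < NO)%N ->
  ((i + 1) %% (4 * NO)) %/ NO = i %/ NO /\ ((i + 1) %% (4 * NO)) %% NO = (i %% NO).+1.
Proof.
move=> hi hs.
have hm : i.+1 %% NO = (i %% NO).+1.
  by rewrite -addn1 -modnDml addn1 (modn_small hs).
have hd : (NO %| i.+1) = false by rewrite /dvdn hm.
have ed : i.+1 %/ NO = i %/ NO by rewrite divnS ?hNO // hd.
have hr : (i %/ NO < 4)%N by rewrite ltn_divLR ?hNO.
have hi1 : (i.+1 < 4 * NO)%N by rewrite -ltn_divLR ?hNO // ed.
by rewrite addn1 (modn_small hi1) ed hm.
Qed.

Lemma next_wrap i : (i < 4 * NO)%N -> i %% NO = NO.-1 ->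
  ((i + 1) %% (4 * NO)) %/ NO = (i %/ NO + 1) %% 4 /\ ((i + 1) %% (4 * NO)) %% NO = 0.
Proof.
move=> hi hs.
have e : i + 1 = (i %/ NO + 1) * NO.
  rewrite {1}(divn_eq i NO) hs mulnDl mul1n; have := hNO.
  move: (i %/ NO * NO) => x; lia.
rewrite e -muln_modl mulnK ?hNO //; split=> //.
by rewrite modnMl.
Qed.

Lemma dlt_bound x : ((x %% h).+1 < kO)%N.
Proof. have := ltn_pmod x hh; rewrite /kO; move: (x %% h) => a; lia. Qed.

Lemma dlt_sum x y : (0 < (x %% h).+1 + (y %% h).+1 < kO)%N.
Proof.
have := ltn_pmod x hh; have := ltn_pmod y hh; rewrite /kO.
move: (x %% h) (y %% h) => a b; lia.
Qed.

Lemma last_or a n : (a < n)%N -> (n <= a.+1)%N -> a = n.-1.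
Proof. lia. Qed.

Lemma not_last a n : (a.+1 < n)%N -> (a == n.-1) = false.
Proof. move=> h0; apply/negbTE; rewrite neq_ltn; apply/orP; left; lia. Qed.

Lemma magO i j : (i < 4 * NO)%N -> (j < 4 * NO)%N ->
  X (i %% NO) = X (((j + 1) %% (4 * NO)) %% NO) ->
  X (((i + 1) %% (4 * NO)) %% NO) = X (j %% NO) -> False.
Proof.
move=> hi hj; rewrite !X_next // => e1 e2.
apply: (@cong_contra kO (X (i %% NO)) ((i %% NO %% h).+1 + (j %% NO %% h).+1)).
- exact: X_lt.
- exact: dlt_sum.
- by rewrite {1}e1 -e2 modnDml addnA.
Qed.

Lemma odd_exists q : (2 * kO < q)%N ->
  exists w : seq 'Z_q, size w = 4 * NO /\ is_SOS 2 w /\ is_good 2 w.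
Proof.
move=> hq.
apply: (@frame q kO (4 * NO) AO) => //.
- exact: hkO.
- by move=> i _; apply: AO_lt.
- move=> i j hi hj e e'.
  move: e; rewrite /AO => /(dec (X_lt _) (X_lt _)) [Xe se].
  move: e'; rewrite /AO => /(dec (X_lt _) (X_lt _)) [].
  rewrite !X_next // Xe => /eqP; rewrite eqn_modDl.
  have h1 := dlt_bound (i %% NO).
  have h2 := dlt_bound (j %% NO).
  rewrite (modn_small h1) (modn_small h2) eqSS => /eqP et se'.
  have hJi : (i %% NO < kO * h)%N by rewrite ltn_mod hNO.
  have hJj : (j %% NO < kO * h)%N by rewrite ltn_mod hNO.
  have Je := W_inj hh copO hJi hJj Xe et.
  have hri : (i %/ NO < 4)%N by rewrite ltn_divLR ?hNO.
  have hrj : (j %/ NO < 4)%N by rewrite ltn_divLR ?hNO.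
  suff er : i %/ NO = j %/ NO by rewrite (divn_eq i NO) (divn_eq j NO) er Je.
  have hJ : (i %% NO < NO)%N by rewrite ltn_mod hNO.
  case: (ltnP (i %% NO).+1 NO) => hs.
    have [a1 b1] := next_succ hi hs.
    have hs' : ((j %% NO).+1 < NO)%N by rewrite -Je.
    have [a2 b2] := next_succ hj hs'.
    move: se se'; rewrite a1 b1 a2 b2 -Je /sig.
    rewrite (not_last hs).
    rewrite /=.
    exact: bits_inj.
  have hw : i %% NO = NO.-1 by apply: last_or.
  have [a1 b1] := next_wrap hi hw.
  have [a2 b2] := next_wrap hj (etrans (esym Je) hw).
  move: se se'; rewrite a1 b1 a2 b2 -Je /sig hw eqxx.
  have -> : (0 == NO.-1) = false by have := NO_ge3; case: NO => [|[|[|n]]].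
  rewrite /=.
  exact: wrap_inj.
- move=> i j hi hj e1 e2.
  apply: (magO hi hj); rewrite -!AO_mod; [rewrite e1 | rewrite e2]; done.
- move=> i j hi hj e1 e2.
  have hm x : ((x + kO) %% (2 * kO)) %% kO = x %% kO.
    by rewrite (@modn_dvdm (2 * kO) (x + kO) kO) ?modnDr //; exact: dvdn_mull (dvdnn kO).
  apply: (magO hi hj); rewrite -!AO_mod; [rewrite e1 hm | rewrite e2 hm]; done.
Qed.
End Odd.

Lemma empty_ok q : is_SOS 2 ([::] : seq 'Z_q) /\ is_good 2 ([::] : seq 'Z_q).
Proof. by split; [split | ]. Qed.

Lemma sos_odd_size t : (2 <= t)%N ->
  ((4 * t - 2) * (4 * t - 4)) %/ 2 = 4 * NO (t - 1).
Proof.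
move=> ht; rewrite /NO /kO.
have -> : (4 * t - 2) * (4 * t - 4) = 4 * ((2 * (t - 1) + 1) * (t - 1)) * 2.
  move: ht; case: t => [|[|s]] // _.
  have -> : (4 * s.+2 - 2 = 4 * s + 6)%N by lia.
  have -> : (4 * s.+2 - 4 = 4 * s + 4)%N by lia.
  have -> : (s.+2 - 1 = s + 1)%N by lia.
  ring.
by rewrite mulnK.
Qed.

Lemma sos_even_size t : (2 <= t)%N ->
  ((4 * t) * (4 * t - 4)) %/ 2 = nE t * mE t.
Proof.
move=> ht; rewrite /nE /mE.
have -> : (4 * t) * (4 * t - 4) = 4 * t * (2 * t - 2) * 2.
  move: ht; case: t => [|[|s]] // _.
  have -> : (4 * s.+2 - 4 = 4 * s + 4)%N by lia.
  have -> : (2 * s.+2 - 2 = 2 * s + 2)%N by lia.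
  ring.
by rewrite mulnK.
Qed.

Theorem corollary4p7 (q : nat) (hq : (6 <= q)%N) :
  exists w : seq 'Z_q,
    size w = sos_period q /\ is_SOS 2 w /\ is_good 2 w.
Proof.
have hr : (q %% 4 < 4)%N by rewrite ltn_mod.
have eq := divn_eq q 4.
move: (q %/ 4) eq => t eq.
rewrite /sos_period.
move: hr; case hr: (q %% 4) => [|[|[|[|r]]]] // _; rewrite hr in eq.
- have ht : (2 <= t)%N by lia.
  have hh : (1 <= t - 1)%N by lia.
  have [|w [sw rest]] := odd_exists hh (q := q); first by rewrite /kO; lia.
  exists w; split => //; rewrite sw -(sos_odd_size ht).
  by congr (_ %/ 2); rewrite eq; congr (_ * _); lia.
- have ht : (2 <= t)%N by lia.
  have hh : (1 <= t - 1)%N by lia.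
  have [|w [sw rest]] := odd_exists hh (q := q); first by rewrite /kO; lia.
  exists w; split => //; rewrite sw -(sos_odd_size ht).
  by congr (_ %/ 2); rewrite eq; congr (_ * _); lia.
- case: (leqP t 1) => ht.
    have -> : q = 6 by lia.
    by exists [::]; split=> //; apply: empty_ok.
  have [|w [sw rest]] := even_exists ht (q := q); first by lia.
  exists w; split => //; rewrite sw -(sos_even_size ht).
  by congr (_ %/ 2); rewrite eq; congr (_ * _); lia.
- case: (leqP t 1) => ht.
    have -> : q = 7 by lia.
    by exists [::]; split=> //; apply: empty_ok.
  have [|w [sw rest]] := even_exists ht (q := q); first by lia.
  exists w; split => //; rewrite sw -(sos_even_size ht).
  by congr (_ %/ 2); rewrite eq; congr (_ * _); lia.
Qed.
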